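(* Let $\mathcal{A}$ be a generalized convex set of density operators on a finite-dimensional Hilbert space, let $\rho,\sigma,\tau,\omega\in\mathcal{A}$ and $t\in[0,1]$. If $\alpha>1$, then $$\hat{D}_{\alpha}(M^{t}_{\rho,\sigma}\|M^{t}_{\tau,\omega})\le t\,\hat{D}_{\alpha}(\rho\|\tau)+(1-t)\,\hat{D}_{\alpha}(\sigma\|\omega)+\frac{\alpha}{1-\alpha}\log\operatorname{Tr}(\rho^{t}\sigma^{1-t})+\log\operatorname{Tr}(\tau^{t}\omega^{1-t}),$$ and if $0<\alpha<1$ the reverse inequality holds.
   Context: A density operator is a positive semidefinite operator of unit trace. The Petz–Rényi $\alpha$-relative entropy, for $\alpha>0$, $\alpha\ne1$, is $\hat{D}_{\alpha}(\rho\|\sigma)=\frac{1}{\alpha-1}\log\operatorname{Tr}(\rho^{\alpha}\sigma^{1-\alpha})$. For density operators $\rho,\sigma$ and $t\in[0,1]$, $M^{t}_{\rho,\sigma}=\rho^{t}\sigma^{1-t}/\operatorname{Tr}(\rho^{t}\sigma^{1-t})$. A set $\mathcal{A}$ of density operators is called generalized convex if for all $\rho,\sigma\in\mathcal{A}$ and all $t\in[0,1]$, $M^{t}_{\rho,\sigma}$ is a density operator belonging to $\mathcal{A}$. *)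

(* Defs.v *)
From HB Require Import structures.
From mathcomp Require Import all_boot all_order all_algebra.
From mathcomp Require Import sesquilinear spectral.
From mathcomp Require Import complex.
From mathcomp Require Import all_classical all_reals.
From mathcomp Require Import exp.
Set Implicit Arguments.
Unset Strict Implicit.
Unset Printing Implicit Defensive.
Import Order.TTheory GRing.Theory Num.Theory Num.Def.
Local Open Scope ring_scope.
Local Open Scope complex_scope.

Section Quantum.
Variables (R : realType) (n : nat).
Local Notation C := (R[i]).
Local Notation M := ('M[C]_n).

Definition adjmx (X : M) : M := (map_mx conjC X)^T.

Definition psd (X : M) : Prop :=
  X \is hermsymmx /\ forall v : 'rV[C]_n, 0 <= (v *m X *m (map_mx conjC v)^T) 0 0.

Definition density (X : M) : Prop := psd X /\ \tr X = 1.

(* real power X^s of a PSD matrix via its spectral decomposition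
   X = P^-1 diag(l) P; eigenvalue l is sent to l `^ s (powR convention:
   0 `^ 0 = 1, 0 `^ s = 0 for s <> 0, i.e. negative powers are taken on
   the support). *)
Definition mxpowR (X : M) (s : R) : M :=
  invmx (spectralmx X) *m
  diag_mx (map_mx (fun z : C => (powR (complex.Re z) s)%:C) (spectral_diag X))
  *m spectralmx X.

Definition Mt (t : R) (rho sigma : M) : M :=
  (\tr (mxpowR rho t *m mxpowR sigma (1 - t)))^-1 *:
    (mxpowR rho t *m mxpowR sigma (1 - t)).

Definition gen_convex (A : M -> Prop) : Prop :=
  forall rho sigma, A rho -> A sigma -> forall t : R, 0 <= t <= 1 ->
    density (Mt t rho sigma) /\ A (Mt t rho sigma).

Definition eln (x : R) : \bar R := if 0 < x then (ln x)%:E else -oo%E.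

Definition petz (alpha : R) (rho sigma : M) : \bar R :=
  if (1 < alpha) && ~~ (rho <= sigma)%MS then +oo%E
  else (((alpha - 1)^-1)%:E *
       eln (complex.Re (\tr (mxpowR rho alpha *m mxpowR sigma (1 - alpha)))))%E.

End Quantum.

(* Main.v *)
Require Import Defs.
From HB Require Import structures.
From mathcomp Require Import all_boot all_order all_algebra.
From mathcomp Require Import sesquilinear spectral complex.
From mathcomp Require Import all_classical all_reals exp.
From mathcomp Require Import lra ring.
Import Order.TTheory GRing.Theory Num.Theory Num.Def.
Local Open Scope ring_scope.
Local Open Scope complex_scope.
Set Implicit Arguments.
Unset Strict Implicit.
Unset Printing Implicit Defensive.

Section G.
Variables (F : fieldType) (n : nat).
Local Notation C := F.
Local Notation M := ('M[F]_n).

Lemma diag_rel (P U : M) (l d : 'rV[C]_n) :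
  P \in unitmx -> U \in unitmx ->
  invmx P *m diag_mx l *m P = invmx U *m diag_mx d *m U ->
  diag_mx l *m (P *m invmx U) = (P *m invmx U) *m diag_mx d.
Proof.
move=> Pu Uu H.
have := congr1 (fun X => P *m X *m invmx U) H => /=.
rewrite !mulmxA mulmxV // mul1mx mulmxK // => ->.
Qed.

Lemma diag_rel_entry (P U : M) (l d : 'rV[C]_n) :
  P \in unitmx -> U \in unitmx ->
  invmx P *m diag_mx l *m P = invmx U *m diag_mx d *m U ->
  forall i j, (P *m invmx U) i j != 0 -> l 0 i = d 0 j.
Proof.
move=> Pu Uu H i j.
have := diag_rel Pu Uu H; set W := P *m invmx U => HW W0; clearbody W.
move/matrixP: HW => /(_ i j).
rewrite mul_diag_mx mul_mx_diag !mxE => E.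
by apply: (mulIf W0); rewrite E mulrC.
Qed.

Lemma FC (P U : M) (l d : 'rV[C]_n) (f : C -> C) :
  P \in unitmx -> U \in unitmx ->
  invmx P *m diag_mx l *m P = invmx U *m diag_mx d *m U ->
  invmx P *m diag_mx (map_mx f l) *m P = invmx U *m diag_mx (map_mx f d) *m U.
Proof.
move=> Pu Uu H.
have := diag_rel_entry Pu Uu H; set W := P *m invmx U => HE.
have PW : P = W *m U by rewrite /W mulmxKV.
have WE : W = P *m invmx U by [].
clearbody W.
have HW : diag_mx (map_mx f l) *m W = W *m diag_mx (map_mx f d).
  apply/matrixP => i j; rewrite mul_diag_mx mul_mx_diag !mxE.
  have [W0|W0] := eqVneq (W i j) 0; first by rewrite W0 mulr0 mul0r.
  by rewrite (HE _ _ W0) mulrC.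
by rewrite {2}PW mulmxA -(mulmxA _ _ W) HW !mulmxA WE mulmxA (mulVmx Pu) mul1mx.
Qed.

Lemma eig_exists (P U : M) (l d : 'rV[C]_n) :
  P \in unitmx -> U \in unitmx ->
  invmx P *m diag_mx l *m P = invmx U *m diag_mx d *m U ->
  forall j, exists i, d 0 j = l 0 i.
Proof.
move=> Pu Uu H j.
set W := P *m invmx U.
have Wu : W \in unitmx by rewrite unitmx_mul Pu unitmx_inv.
case: (pickP (fun i => W i j != 0)) => [i Wi|none].
  by exists i; rewrite (diag_rel_entry Pu Uu H Wi).
have /matrixP /(_ j j) := mulVmx Wu.
clearbody W.
rewrite !mxE eqxx /= big1 => [|k _]; last first.
  by have := none k; move=> /= /negbFE /eqP ->; rewrite mulr0.
by move/eqP; rewrite eq_sym oner_eq0.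
Qed.

Lemma dg_mul (U : M) (a b : 'rV[C]_n) : U \in unitmx ->
  (invmx U *m diag_mx a *m U) *m (invmx U *m diag_mx b *m U) =
  invmx U *m diag_mx (\row_j (a 0 j * b 0 j)) *m U.
Proof.
move=> Uu; rewrite !mulmxA (mulmxK Uu) -(mulmxA (invmx U)) mulmx_diag.
by [].
Qed.

Lemma dg_tr (U : M) (a : 'rV[C]_n) : U \in unitmx ->
  \tr (invmx U *m diag_mx a *m U) = \sum_j a 0 j.
Proof.
move=> Uu; rewrite mxtrace_mulC mulmxA (mulmxV Uu) mul1mx mxtrace_diag.
by [].
Qed.

Lemma dg_scale (U : M) (a : 'rV[C]_n) c :
  c *: (invmx U *m diag_mx a *m U) = invmx U *m diag_mx (c *: a) *m U.
Proof.
rewrite scalemxAl scalemxAr; congr (_ *m _ *m _).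
by apply/matrixP => i j; rewrite !mxE mulrnAr.
Qed.

Lemma dg1 (U : M) : U \in unitmx -> invmx U *m diag_mx (const_mx 1) *m U = 1%:M.
Proof.
move=> Uu; have -> : diag_mx (const_mx 1 : 'rV[C]_n) = 1%:M.
  by apply/matrixP => i j; rewrite !mxE.
by rewrite mulmx1 mulVmx.
Qed.

Lemma dg_sub (U : M) (a b : 'rV[C]_n) : U \in unitmx ->
  (invmx U *m diag_mx a *m U <= invmx U *m diag_mx b *m U)%MS =
  [forall j, (a 0 j != 0) ==> (b 0 j != 0)].
Proof.
move=> Uu; apply/idP/forallP.
  case/submxP => D E j; apply/implyP; apply: contraNN => /eqP bj.
  have := congr1 (fun X => U *m X *m invmx U) E => /=.
  rewrite !mulmxA (mulmxV Uu) mul1mx !(mulmxK Uu) => /matrixP /(_ j j).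
  by rewrite mul_mx_diag !mxE eqxx !mulr1n bj mulr0 => ->.
move=> H; apply/submxP.
exists (invmx U *m diag_mx (\row_j (a 0 j / b 0 j)) *m U).
rewrite dg_mul //; congr (_ *m diag_mx _ *m _); apply/matrixP => i j.
rewrite !mxE (ord1 i); have [bj|bj] := eqVneq (b 0 j) 0.
  have := H j; rewrite bj eqxx implybF negbK => /eqP ->.
  by rewrite mulr0.
by rewrite divfK.
Qed.

End G.

Section H.
Variables (C : numClosedFieldType) (n : nat).
Local Notation M := ('M[C]_n).
Local Open Scope sesquilinear_scope.

Lemma herm_eq (X : M) : X \is hermsymmx -> X = X ^t* .
Proof. by move/is_hermitianmxP; rewrite expr0 scale1r. Qed.

Lemma dg_adj (P : M) (d : 'rV[C]_n) : P \is unitarymx ->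
  (invmx P *m diag_mx d *m P)^t* = invmx P *m diag_mx (map_mx conjC d) *m P.
Proof.
move=> Pu; rewrite invmx_unitary // !trmx_mul !map_mxM trmxCK tr_diag_mx map_diag_mx.
by rewrite mulmxA.
Qed.

Lemma codiag (As : seq M) :
  (forall A, A \in As -> A \is hermsymmx) ->
  {in As &, forall A B, comm_mx A B} ->
  exists2 U : M, U \in unitmx &
    forall A, A \in As -> exists d, A = invmx U *m diag_mx d *m U.
Proof.
move=> Ah Ac; have [P Pu /allP Ptrig] := cotrigonalization Ac.
have Puu : P \in unitmx by exact: unitarymx_unit.
exists P => // A AAs.
have := Ptrig A AAs; rewrite /= /similar_to conjumx // invmx_unitary // => /is_trig_mxP Bt.
set B := P *m A *m P^t* in Bt.
have BH : B = B^t*.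
  rewrite /B !trmx_mul !map_mxM trmxCK -(herm_eq (Ah A AAs)).
  by rewrite mulmxA.
have BE : B = P *m A *m P^t* by [].
clearbody B.
have BD : B = diag_mx (\row_i B i i).
  apply/matrixP => i j; rewrite !mxE.
  case: (ltngtP i j) => [lt|gt|/val_inj ->]; last by rewrite eqxx mulr1n.
  - by rewrite Bt // -val_eqE /= ltn_eqF.
  - by rewrite BH !mxE Bt // conjC0 -val_eqE /= gtn_eqF.
exists (\row_i B i i); rewrite -BD BE -invmx_unitary //.
by rewrite !mulmxA mulVmx // mul1mx mulmxKV.
Qed.


Definition pw (g : C -> C) (X : M) : M :=
  invmx (spectralmx X) *m diag_mx (map_mx g (spectral_diag X)) *m spectralmx X.

Lemma pw_dg (X U : M) (a : 'I_n -> C) (g : C -> C) :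
  X \is normalmx -> U \in unitmx -> X = invmx U *m diag_mx (\row_j a j) *m U ->
  pw g X = invmx U *m diag_mx (\row_j g (a j)) *m U.
Proof.
move=> /orthomx_spectralP XP Uu XE; rewrite /pw.
rewrite (FC g (spectral_unit X) Uu (etrans (esym XP) XE)).
by congr (_ *m diag_mx _ *m _); apply/matrixP => i j; rewrite !mxE.
Qed.

Lemma pw_herm (X : M) (g : C -> C) : X \is normalmx ->
  (forall i, conjC (g (spectral_diag X 0 i)) = g (spectral_diag X 0 i)) ->
  (pw g X)^t* = pw g X.
Proof.
move=> _ Hg; rewrite /pw dg_adj ?spectral_unitarymx //.
by congr (_ *m diag_mx _ *m _); apply/matrixP => i j; rewrite !mxE (ord1 i) Hg.
Qed.

Lemma pw_sq (X : M) (g : C -> C) : X \is normalmx ->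
  (forall i, g (spectral_diag X 0 i) * g (spectral_diag X 0 i) = spectral_diag X 0 i) ->
  pw g X *m pw g X = X.
Proof.
move=> /orthomx_spectralP XP Hg; rewrite /pw dg_mul ?spectral_unit // [RHS]XP.
by congr (_ *m diag_mx _ *m _); apply/matrixP => i j; rewrite !mxE (ord1 i) Hg.
Qed.

Lemma pw_id (X : M) (g : C -> C) : X \is normalmx ->
  (forall i, g (spectral_diag X 0 i) = spectral_diag X 0 i) -> pw g X = X.
Proof.
move=> /orthomx_spectralP XP Hg; rewrite /pw [RHS]XP.
by congr (_ *m diag_mx _ *m _); apply/matrixP => i j; rewrite !mxE (ord1 i) Hg.
Qed.

Lemma pw_one (X : M) (g : C -> C) : (forall z, g z = 1) -> pw g X = 1%:M.
Proof.
move=> Hg; rewrite /pw -[RHS](dg1 (spectral_unit X)).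
by congr (_ *m diag_mx _ *m _); apply/matrixP => i j; rewrite !mxE Hg.
Qed.

Lemma comm_gen (HX HY X Y : M) :
  HX^t* = HX -> HY^t* = HY -> HX *m HX = X -> HY *m HY = Y ->
  ((\tr (HX *m HY))^-1 *: (HX *m HY)) \is hermsymmx ->
  \tr ((\tr (HX *m HY))^-1 *: (HX *m HY)) = 1 -> X *m Y = Y *m X.
Proof.
move=> HXh HYh <- <- /herm_eq Mh; rewrite mxtraceZ => Tr1.
set T := \tr (HX *m HY) in Mh Tr1.
have T0 : T != 0.
  by apply/eqP => T0; move: Tr1; rewrite T0 invr0 mul0r => /eqP; rewrite eq_sym oner_eq0.
have Ti0 : T^-1 != 0 by rewrite invr_eq0.
have E : T^-1 *: (HX *m HY) = conjC (T^-1) *: (HY *m HX).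
  rewrite {1}Mh linearZ /= map_mxZ trmx_mul map_mxM HXh HYh.
  by [].
have cT : conjC (T^-1) = T^-1.
  have := congr1 mxtrace E; rewrite !mxtraceZ (mxtrace_mulC HY HX) -/T => E'.
  by apply: (mulIf T0); rewrite E'.
rewrite cT in E; have {E} E := scalerI Ti0 E.
have F : HX *m (HY *m HY) = HY *m HY *m HX by rewrite mulmxA E -mulmxA E mulmxA.
by rewrite -mulmxA F mulmxA F -mulmxA.
Qed.

Lemma dg_mulr (U : M) (a b : 'I_n -> C) : U \in unitmx ->
  (invmx U *m diag_mx (\row_j a j) *m U) *m (invmx U *m diag_mx (\row_j b j) *m U) =
  invmx U *m diag_mx (\row_j (a j * b j)) *m U.
Proof.
move=> Uu; rewrite dg_mul //.
by congr (_ *m diag_mx _ *m _); apply/matrixP => i j; rewrite !mxE.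
Qed.

Lemma dg_trr (U : M) (a : 'I_n -> C) : U \in unitmx ->
  \tr (invmx U *m diag_mx (\row_j a j) *m U) = \sum_j a j.
Proof. by move=> Uu; rewrite dg_tr //; apply: eq_bigr => j _; rewrite mxE. Qed.

Lemma dg_scaler (U : M) (a : 'I_n -> C) c :
  c *: (invmx U *m diag_mx (\row_j a j) *m U) = invmx U *m diag_mx (\row_j (c * a j)) *m U.
Proof.
rewrite dg_scale.
by congr (_ *m diag_mx _ *m _); apply/matrixP => i j; rewrite !mxE.
Qed.

Lemma dg_subr (U : M) (a b : 'I_n -> C) : U \in unitmx ->
  (invmx U *m diag_mx (\row_j a j) *m U <= invmx U *m diag_mx (\row_j b j) *m U)%MS =
  [forall j, (a j != 0) ==> (b j != 0)].
Proof.
move=> Uu; rewrite dg_sub //; apply/eq_forallb => j; rewrite !mxE.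
by [].
Qed.

End H.

Section Q.
Variables (R : realType) (n : nat).
Local Notation C := (R[i]).
Local Notation M := ('M[C]_n).
Local Open Scope sesquilinear_scope.

Lemma mxpowR_pw (X : M) s : mxpowR X s = pw (fun z : C => ((complex.Re z) `^ s)%:C) X.
Proof. by []. Qed.

Lemma psd_spec (X : M) : psd X -> forall i, 0 <= spectral_diag X 0 i.
Proof.
move=> [Xh Xq] i.
have /hermitian_normalmx /orthomx_spectralP XE := Xh.
set P := spectralmx X in XE; set l := spectral_diag X in XE *.
have Pu : P \is unitarymx by exact: spectral_unitarymx.
have E : P *m X *m P^t* = diag_mx l.
  rewrite XE invmx_unitary // !mulmxA (unitarymxP Pu) mul1mx.
  by rewrite mulmxtVK.
have := Xq (row i P).
have -> : (row i P *m X *m (map_mx conjC (row i P))^T) 0 0 = (P *m X *m P^t*) i i.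
  rewrite -row_mul !mxE; apply: eq_bigr => k _; rewrite !mxE.
  by [].
by rewrite E mxE eqxx mulr1n.
Qed.
Lemma cge0 (z : C) : 0 <= z -> z = (complex.Re z)%:C /\ 0 <= complex.Re z.
Proof. by case: z => a b; rewrite lecE /= => /andP[/eqP -> ha]. Qed.
Lemma psd_dg (X U : M) d : psd X -> U \in unitmx ->
  X = invmx U *m diag_mx d *m U -> forall j, 0 <= d 0 j.
Proof.
move=> Xp Uu XE j; have Xh := Xp.1.
have /hermitian_normalmx /orthomx_spectralP XP := Xh.
have [i ->] := eig_exists (spectral_unit X) Uu (etrans (esym XP) XE) j.
exact: psd_spec.
Qed.
Lemma conjR (x : R) : conjC (x%:C : C) = x%:C.
Proof. by apply/eqP; rewrite eq_complex /= oppr0 !eqxx. Qed.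
Lemma CinvR (x : R) : (x%:C : C)^-1 = (x^-1)%:C.
Proof. by rewrite fmorphV. Qed.

Lemma psd_row (X U : M) d : psd X -> U \in unitmx ->
  X = invmx U *m diag_mx d *m U ->
  exists x : 'I_n -> R, (forall j, 0 <= x j) /\ X = invmx U *m diag_mx (\row_j (x j)%:C) *m U.
Proof.
move=> Xp Uu XE; exists (fun j => complex.Re (d 0 j)); split.
  by move=> j; exact: (cge0 (psd_dg Xp Uu XE j)).2.
have dE : d = \row_j (complex.Re (d 0 j))%:C.
  by apply/matrixP => i j; rewrite !mxE (ord1 i) -(cge0 (psd_dg Xp Uu XE j)).1.
by rewrite {1}XE {1}dE.
Qed.

Lemma mxpowR_row (X U : M) (x : 'I_n -> R) s : X \is hermsymmx -> U \in unitmx ->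
  X = invmx U *m diag_mx (\row_j (x j)%:C) *m U ->
  mxpowR X s = invmx U *m diag_mx (\row_j ((x j) `^ s)%:C) *m U.
Proof.
move=> Xh Uu XE; rewrite mxpowR_pw.
exact: (pw_dg _ (hermitian_normalmx Xh) Uu XE).
Qed.

Lemma half_sq (z : C) : 0 <= z ->
  ((complex.Re z) `^ 2^-1)%:C * ((complex.Re z) `^ 2^-1)%:C = z.
Proof.
move=> /cge0 [E z0]; rewrite [RHS]E -rmorphM; congr (_%:C).
rewrite -powRD; last by apply/implyP => /eqP; lra.
by rewrite (_ : 2^-1 + 2^-1 = 1 :> R); [rewrite powRr1 | lra].
Qed.

Lemma comm_of (X Y : M) : psd X -> psd Y -> density (Mt (2^-1) X Y) -> X *m Y = Y *m X.
Proof.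
move=> Xp Yp [[Mh _] Mtr].
have h2 : 1 - 2^-1 = 2^-1 :> R by lra.
rewrite /Mt h2 in Mh Mtr.
have hX : (mxpowR X (2^-1))^t* = mxpowR X (2^-1).
  rewrite mxpowR_pw; apply: pw_herm (hermitian_normalmx Xp.1) _ => i; exact: conjR.
have hY : (mxpowR Y (2^-1))^t* = mxpowR Y (2^-1).
  rewrite mxpowR_pw; apply: pw_herm (hermitian_normalmx Yp.1) _ => i; exact: conjR.
have sX : mxpowR X (2^-1) *m mxpowR X (2^-1) = X.
  rewrite mxpowR_pw; apply: pw_sq (hermitian_normalmx Xp.1) _ => i.
  exact: half_sq (psd_spec Xp i).
have sY : mxpowR Y (2^-1) *m mxpowR Y (2^-1) = Y.
  rewrite mxpowR_pw; apply: pw_sq (hermitian_normalmx Yp.1) _ => i.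
  exact: half_sq (psd_spec Yp i).
exact: (comm_gen hX hY sX sY Mh Mtr).
Qed.

End Q.

Section S.
Variables (R : realType) (n : nat).
Local Notation I := ('I_n).

Lemma sum_ge_term (x : I -> R) j : (forall k, 0 <= x k) -> x j <= \sum_k x k.
Proof.
move=> x0; rewrite (bigD1 j) //= lerDl; apply: sumr_ge0 => k _; exact: x0.
Qed.

Lemma sum_eq0 (x : I -> R) : (forall k, 0 <= x k) -> \sum_k x k = 0 -> forall k, x k = 0.
Proof. by move=> x0 S0 k; apply: (psumr_eq0P (P := predT)) => // i _. Qed.

Lemma amgm (a b t : R) : 0 <= a -> 0 <= b -> 0 < t < 1 ->
  a `^ t * b `^ (1 - t) <= t * a + (1 - t) * b.
Proof.
move=> a0 b0 /andP[t0 t1].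
have t'0 : 0 < 1 - t by lra.
have := @conjugate_powR R (a `^ t) (b `^ (1 - t)) t^-1 (1 - t)^-1 (powR_ge0 _ _) (powR_ge0 _ _).
rewrite !invr_gt0 t0 t'0 !invrK => /(_ isT isT).
rewrite -!powRrM !mulfV ?gt_eqF // !powRr1 // => H.
rewrite [t * a]mulrC [(1 - t) * b]mulrC; apply: H; lra.
Qed.

Lemma hoelder (x y : I -> R) t : (forall j, 0 <= x j) -> (forall j, 0 <= y j) -> 0 < t < 1 ->
  \sum_j x j `^ t * y j `^ (1 - t) <= (\sum_j x j) `^ t * (\sum_j y j) `^ (1 - t).
Proof.
move=> x0 y0 /andP[t0 t1].
have tn0 : t != 0 by rewrite gt_eqF.
have t'n0 : 1 - t != 0 by apply/eqP; lra.
set X := \sum_j x j; set Y := \sum_j y j.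
have X0 : 0 <= X by apply: sumr_ge0.
have Y0 : 0 <= Y by apply: sumr_ge0.
have [Xz|Xnz] := eqVneq X 0.
  rewrite big1 ?mulr_ge0 ?powR_ge0 // => j _.
  by rewrite (sum_eq0 x0 Xz j) powR0 // mul0r.
have [Yz|Ynz] := eqVneq Y 0.
  rewrite big1 ?mulr_ge0 ?powR_ge0 // => j _.
  by rewrite (sum_eq0 y0 Yz j) powR0 // mulr0.
have Xp : 0 < X by rewrite lt_def Xnz.
have Yp : 0 < Y by rewrite lt_def Ynz.
have E : forall j, x j `^ t * y j `^ (1 - t) =
    X `^ t * Y `^ (1 - t) * ((x j / X) `^ t * (y j / Y) `^ (1 - t)).
  move=> j.
  rewrite {1}(_ : x j = X * (x j / X)); last by rewrite mulrC divfK.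
  rewrite {1}(_ : y j = Y * (y j / Y)); last by rewrite mulrC divfK.
  rewrite !powRM ?divr_ge0 ?invr_ge0 //; ring.
under eq_bigr do rewrite E.
rewrite -mulr_sumr; apply: ler_piMr; first by rewrite mulr_ge0 ?powR_ge0.
apply: le_trans (_ : \sum_j (t * (x j / X) + (1 - t) * (y j / Y)) <= 1).
  apply: ler_sum => j _; apply: amgm; rewrite ?divr_ge0 //; lra.
rewrite big_split /= -!mulr_sumr -!mulr_suml -/X -/Y !mulfV //; lra.
Qed.

Definition P0 (al : R) (x y : I -> R) : \bar R :=
  if (1 < al) && ~~ [forall j, (x j != 0) ==> (y j != 0)] then +oo%E
  else (((al - 1)^-1)%:E * eln (\sum_j x j `^ al * y j `^ (1 - al)))%E.

Lemma eln_pos (x : R) : 0 < x -> eln x = (ln x)%:E.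
Proof. by move=> x0; rewrite /eln x0. Qed.

Lemma eln_npos (x : R) : ~~ (0 < x) -> eln x = -oo%E.
Proof. by move=> x0; rewrite /eln (negbTE x0). Qed.

Lemma invpowR (Z p : R) : 0 < Z -> Z^-1 `^ p = (Z `^ p)^-1.
Proof.
move=> Z0; have Zp : 0 < Z `^ p by apply: powR_gt0.
have E : Z^-1 `^ p * Z `^ p = 1.
  by rewrite -powRM ?invr_ge0 ?ltW // mulVf ?gt_eqF // powR1.
by rewrite -[LHS]mulr1 -(mulfV (lt0r_neq0 Zp)) mulrA E mul1r.
Qed.

Lemma term_eq (r s u w t al : R) : 0 <= r -> 0 <= s -> 0 <= u -> 0 <= w ->
  (r `^ t * s `^ (1 - t)) `^ al * (u `^ t * w `^ (1 - t)) `^ (1 - al) =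
  (r `^ al * u `^ (1 - al)) `^ t * (s `^ al * w `^ (1 - al)) `^ (1 - t).
Proof.
move=> r0 s0 u0 w0.
rewrite (powRM al (powR_ge0 r t) (powR_ge0 s (1 - t))).
rewrite (powRM (1 - al) (powR_ge0 u t) (powR_ge0 w (1 - t))).
rewrite (powRM t (powR_ge0 r al) (powR_ge0 u (1 - al))).
rewrite (powRM (1 - t) (powR_ge0 s al) (powR_ge0 w (1 - al))).
rewrite -!powRrM.
rewrite (mulrC al t) (mulrC al (1 - t)) (mulrC (1 - al) t) (mulrC (1 - al) (1 - t)).

ring.
Qed.

Lemma pos_sum (x : I -> R) j : (forall k, 0 <= x k) -> 0 < x j -> 0 < \sum_k x k.
Proof. by move=> x0 xj; apply: lt_le_trans xj (sum_ge_term _ x0). Qed.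

Lemma exists_nz (x : I -> R) : \sum_k x k = 1 -> exists j, x j != 0.
Proof.
move=> S1; case: (pickP (fun j => x j != 0)) => [j xj|none]; first by exists j.
move: S1; rewrite big1 => [/eqP|j _]; first by rewrite eq_sym oner_eq0.
by have := none j => /= /negbFE /eqP.
Qed.

Lemma P0_supp (al : R) (x y : I -> R) : 1 < al ->
  (forall j, 0 <= x j) -> (forall j, 0 <= y j) -> \sum_j x j = 1 ->
  [forall j, (x j != 0) ==> (y j != 0)] ->
  0 < \sum_j x j `^ al * y j `^ (1 - al) /\
  P0 al x y = ((al - 1)^-1 * ln (\sum_j x j `^ al * y j `^ (1 - al)))%:E.
Proof.
move=> a1 x0 y0 S1 /forallP supp.
have [j xj] := exists_nz S1.
have yj := implyP (supp j) xj.
have Sp : 0 < \sum_j x j `^ al * y j `^ (1 - al).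
  apply: (@pos_sum (fun j => x j `^ al * y j `^ (1 - al)) j).
    by move=> k; rewrite mulr_ge0 ?powR_ge0.
  by rewrite mulr_gt0 // powR_gt0 // lt_def ?xj ?yj ?x0 ?y0.
split => //; rewrite /P0 a1 /= (introT forallP supp) /= eln_pos //.
Qed.

Lemma P0_nsupp (al : R) (x y : I -> R) : 1 < al ->
  ~~ [forall j, (x j != 0) ==> (y j != 0)] -> P0 al x y = +oo%E.
Proof. by move=> a1 ns; rewrite /P0 a1 ns. Qed.

Lemma P0_neq_Ny (al : R) (x y : I -> R) : 1 < al ->
  (forall j, 0 <= x j) -> (forall j, 0 <= y j) -> \sum_j x j = 1 -> P0 al x y != -oo%E.
Proof.
move=> a1 x0 y0 S1; case: (boolP [forall j, (x j != 0) ==> (y j != 0)]) => supp.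
  by have [_ ->] := P0_supp a1 x0 y0 S1 supp.
by rewrite P0_nsupp.
Qed.

Lemma P0_lt1 (al : R) (x y : I -> R) : al < 1 ->
  P0 al x y = (((al - 1)^-1)%:E * eln (\sum_j x j `^ al * y j `^ (1 - al)))%E.
Proof. by move=> a1; rewrite /P0 (ltNge 1 al) (ltW a1). Qed.

Lemma rhs_infty (A B : \bar R) (c t : R) : 0 < t < 1 -> A != -oo%E -> B != -oo%E ->
  (A = +oo%E \/ B = +oo%E) -> (t%:E * A + (1 - t)%:E * B + c%:E = +oo)%E.
Proof.
move=> /andP[t0 t1]; have t'0 : 0 < 1 - t by lra.
have ty : (t%:E * +oo = +oo)%E by rewrite mulry gtr0_sg // mul1e.
have t'y : ((1 - t)%:E * +oo = +oo)%E by rewrite mulry gtr0_sg // mul1e.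
case: A => [a| |] An; last by rewrite eqxx in An.
- case: B => [b| |] Bn H; last by rewrite eqxx in Bn.
  + by case: H.
  + by rewrite t'y addey // addye.
- case: B => [b| |] Bn H; last by rewrite eqxx in Bn.
  + by rewrite ty addye // addye.
  + by rewrite ty t'y.
Qed.

Lemma alg_K (al L l1 l2 : R) : al != 1 ->
  (al - 1)^-1 * (L - al * l1 - (1 - al) * l2) = (al - 1)^-1 * L + (al / (1 - al) * l1 + l2).
Proof.
move=> a1; have h1 : al - 1 != 0 by rewrite subr_eq0.
have h2 : 1 - al != 0 by rewrite subr_eq0 eq_sym.
field; by rewrite h1 h2.
Qed.

Lemma alg_R (k t lX lY c : R) :
  t * (k * lX) + (1 - t) * (k * lY) + c = k * (t * lX + (1 - t) * lY) + c.
Proof. ring. Qed.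

Lemma alg_S (x y z : R) : - x + - y + z = z - x - y.
Proof. ring. Qed.

Lemma core (r s u w : I -> R) (t al : R) :
  (forall j, 0 <= r j) -> (forall j, 0 <= s j) -> (forall j, 0 <= u j) -> (forall j, 0 <= w j) ->
  \sum_j r j = 1 -> \sum_j s j = 1 -> 0 < t < 1 -> 0 < al -> al != 1 ->
  0 < \sum_j r j `^ t * s j `^ (1 - t) -> 0 < \sum_j u j `^ t * w j `^ (1 - t) ->
  let Z1 := \sum_j r j `^ t * s j `^ (1 - t) in
  let Z2 := \sum_j u j `^ t * w j `^ (1 - t) in
  let LHS := P0 al (fun j => Z1^-1 * (r j `^ t * s j `^ (1 - t)))
                   (fun j => Z2^-1 * (u j `^ t * w j `^ (1 - t))) in
  let RHS := (t%:E * P0 al r u + (1 - t)%:E * P0 al s w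
              + (al / (1 - al) * ln Z1 + ln Z2)%:E)%E in
  (1 < al -> (LHS <= RHS)%E) /\ (al < 1 -> (RHS <= LHS)%E).
Proof.
move=> r0 s0 u0 w0 rS sS tt a0 a1 Z1p Z2p Z1 Z2 LHS RHS.
change (is_true (0 < Z1)) in Z1p; change (is_true (0 < Z2)) in Z2p; clearbody Z1 Z2.
have /andP[t0 t1] := tt.
have tn0 : t != 0 by rewrite gt_eqF.
have t'n0 : 1 - t != 0 by apply/eqP; lra.
have an0 : al != 0 by rewrite gt_eqF.
have a'n0 : 1 - al != 0 by apply/eqP => h; move/eqP: a1; apply; lra.
pose a j := r j `^ t * s j `^ (1 - t).
pose b j := u j `^ t * w j `^ (1 - t).
have ag0 : forall j, 0 <= a j by move=> j; rewrite mulr_ge0 ?powR_ge0.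
have bg0 : forall j, 0 <= b j by move=> j; rewrite mulr_ge0 ?powR_ge0.
pose X := \sum_j r j `^ al * u j `^ (1 - al).
pose Y := \sum_j s j `^ al * w j `^ (1 - al).
pose S := \sum_j a j `^ al * b j `^ (1 - al).
pose S' := \sum_j (Z1^-1 * a j) `^ al * (Z2^-1 * b j) `^ (1 - al).
have X0 : 0 <= X by apply: sumr_ge0 => j _; rewrite mulr_ge0 ?powR_ge0.
have Y0 : 0 <= Y by apply: sumr_ge0 => j _; rewrite mulr_ge0 ?powR_ge0.
have S'E : S' = (Z1 `^ al)^-1 * (Z2 `^ (1 - al))^-1 * S.
  rewrite /S' /S mulr_sumr; apply: eq_bigr => j _.
  have Z1i : 0 <= Z1^-1 by rewrite invr_ge0 ltW.
  have Z2i : 0 <= Z2^-1 by rewrite invr_ge0 ltW.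
  rewrite (powRM al Z1i (ag0 j)) (powRM (1 - al) Z2i (bg0 j)).
  by rewrite (invpowR al Z1p) (invpowR (1 - al) Z2p) mulrACA.
have kp : 0 < (Z1 `^ al)^-1 * (Z2 `^ (1 - al))^-1.
  by rewrite mulr_gt0 // invr_gt0 powR_gt0.
have S'p : (0 < S') = (0 < S) by rewrite S'E pmulr_rgt0.
have Sle : S <= X `^ t * Y `^ (1 - t).
  rewrite /S (eq_bigr (fun j => (r j `^ al * u j `^ (1 - al)) `^ t *
                                (s j `^ al * w j `^ (1 - al)) `^ (1 - t))); last first.
    by move=> j _; rewrite /a /b term_eq.
  by apply: hoelder => // j; rewrite mulr_ge0 ?powR_ge0.
have C1 : 0 < S -> [/\ 0 < X, 0 < Y & ln S <= t * ln X + (1 - t) * ln Y].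
  move=> Sp; have XYp := lt_le_trans Sp Sle.
  have Xp : 0 < X.
    rewrite lt_def X0 andbT; apply: contraTneq XYp => ->.
    by rewrite powR0 // mul0r ltxx.
  have Yp : 0 < Y.
    rewrite lt_def Y0 andbT; apply: contraTneq XYp => ->.
    by rewrite powR0 // mulr0 ltxx.
  split => //.
  rewrite -!ln_powR -lnM ?posrE ?powR_gt0 //.
  by rewrite ler_ln ?posrE ?mulr_gt0 ?powR_gt0.
have lnS' : 0 < S -> ln S' = ln S - al * ln Z1 - (1 - al) * ln Z2.
  move=> Sp; have q1 : 0 < Z1 `^ al by apply: powR_gt0.
  have q2 : 0 < Z2 `^ (1 - al) by apply: powR_gt0.
  have p1 : 0 < (Z1 `^ al)^-1 by rewrite invr_gt0.
  have p2 : 0 < (Z2 `^ (1 - al))^-1 by rewrite invr_gt0.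
  rewrite S'E !lnM ?posrE ?mulr_gt0 // !lnV ?posrE //.
  by rewrite !ln_powR alg_S.
have LHSE : LHS = P0 al (fun j => Z1^-1 * a j) (fun j => Z2^-1 * b j) by [].
have Kal : (al - 1)^-1 * (ln S - al * ln Z1 - (1 - al) * ln Z2) =
           (al - 1)^-1 * ln S + (al / (1 - al) * ln Z1 + ln Z2).
  exact: alg_K.
have Kar : forall lX lY : R, (t%:E * ((al - 1)^-1 * lX)%:E + (1 - t)%:E * ((al - 1)^-1 * lY)%:E
          + (al / (1 - al) * ln Z1 + ln Z2)%:E)%E =
          ((al - 1)^-1 * (t * lX + (1 - t) * lY) + (al / (1 - al) * ln Z1 + ln Z2))%:E.
  by move=> lX lY; rewrite -!EFinM -!EFinD alg_R.
split => a1'.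
- have kpos : 0 < (al - 1)^-1 by rewrite invr_gt0 subr_gt0.
  rewrite LHSE /P0 a1' /=.
  case: (boolP [forall j, (Z1^-1 * a j != 0) ==> (Z2^-1 * b j != 0)]) => supp /=.
  + have -> : \sum_j (Z1^-1 * a j) `^ al * (Z2^-1 * b j) `^ (1 - al) = S' by [].
    have [S'pos|S'npos] := boolP (0 < S'); last first.
      by rewrite eln_npos // mulrNy gtr0_sg // mul1e leNye.
    have Sp : 0 < S by rewrite -S'p.
    have [Xp Yp lnle] := C1 Sp.
    case: (boolP [forall j, (r j != 0) ==> (u j != 0)]) => sru; last first.
      rewrite /RHS rhs_infty ?leey //.
      * by apply: P0_neq_Ny.
      * by apply: P0_neq_Ny.
      * by left; rewrite P0_nsupp.
    case: (boolP [forall j, (s j != 0) ==> (w j != 0)]) => ssw; last first.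
      rewrite /RHS rhs_infty ?leey //.
      * by apply: P0_neq_Ny.
      * by apply: P0_neq_Ny.
      * by right; rewrite P0_nsupp.
    rewrite /RHS; have [_ ->] := P0_supp a1' r0 u0 rS sru.
    have [_ ->] := P0_supp a1' s0 w0 sS ssw.
    rewrite Kar eln_pos // -EFinM lee_fin lnS' // Kal lerD2r.
    by rewrite ler_wpM2l // ltW.
  + have [j /andP [mj qj]] : exists j, (Z1^-1 * a j != 0) && ~~ (Z2^-1 * b j != 0).
      move: supp; rewrite negb_forall => /existsP [j]; rewrite negb_imply => h.
      by exists j.
    rewrite negbK mulf_eq0 invr_eq0 (gt_eqF Z2p) /= in qj.
    move: mj; rewrite mulf_eq0 negb_or => /andP[_ mj].
    have [rj sj] : r j != 0 /\ s j != 0.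
      by move: mj; rewrite /a mulf_eq0 negb_or !powR_eq0 !negb_and tn0 t'n0 !orbF => /andP.
    rewrite /RHS rhs_infty ?leey //.
    * by apply: P0_neq_Ny.
    * by apply: P0_neq_Ny.
    move: qj; rewrite /b mulf_eq0 !powR_eq0 tn0 t'n0 !andbT => /orP [] /eqP z.
      by left; apply: P0_nsupp => //; rewrite negb_forall; apply/existsP; exists j; rewrite rj z eqxx.
    by right; apply: P0_nsupp => //; rewrite negb_forall; apply/existsP; exists j; rewrite sj z eqxx.
- have kneg : (al - 1)^-1 < 0 by rewrite invr_lt0 subr_lt0.
  rewrite LHSE P0_lt1 //.
  have -> : \sum_j (Z1^-1 * a j) `^ al * (Z2^-1 * b j) `^ (1 - al) = S' by [].
  have [S'pos|S'npos] := boolP (0 < S'); last first.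
    by rewrite eln_npos // mulrNy ltr0_sg // EFinN mulN1e leey.
  have Sp : 0 < S by rewrite -S'p.
  have [Xp Yp lnle] := C1 Sp.
  rewrite /RHS !P0_lt1 // -/X -/Y !eln_pos // -!EFinM Kar lee_fin lnS' // Kal lerD2r.
  by rewrite ler_wnM2l // ltW.
Qed.

End S.

Section MQ.
Variables (R : realType) (n : nat).
Local Notation C := (R[i]).
Local Notation M := ('M[C]_n).
Local Notation I := ('I_n).

Lemma sumC (f g : I -> R) :
  \sum_j ((f j)%:C * (g j)%:C : C) = (\sum_j f j * g j)%:C.
Proof. by rewrite rmorph_sum; apply: eq_bigr => j _; rewrite rmorphM. Qed.

Lemma sumC1 (f : I -> R) : \sum_j ((f j)%:C : C) = (\sum_j f j)%:C.
Proof. by rewrite rmorph_sum. Qed.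

Lemma tr_row (X Y U : M) (x y : I -> R) p q :
  X \is hermsymmx -> Y \is hermsymmx -> U \in unitmx ->
  X = invmx U *m diag_mx (\row_j (x j)%:C) *m U ->
  Y = invmx U *m diag_mx (\row_j (y j)%:C) *m U ->
  \tr (mxpowR X p *m mxpowR Y q) = (\sum_j x j `^ p * y j `^ q)%:C.
Proof.
move=> Xh Yh Uu XE YE.
rewrite (mxpowR_row p Xh Uu XE) (mxpowR_row q Yh Uu YE) (dg_mulr _ _ Uu) (dg_trr _ Uu).
exact: sumC.
Qed.

Lemma Mt_eq (X Y : M) t : Mt t X Y =
  (\tr (mxpowR X t *m mxpowR Y (1 - t)))^-1 *: (mxpowR X t *m mxpowR Y (1 - t)).
Proof. reflexivity. Qed.

Lemma Mt_row (X Y U : M) (x y : I -> R) t :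
  X \is hermsymmx -> Y \is hermsymmx -> U \in unitmx ->
  X = invmx U *m diag_mx (\row_j (x j)%:C) *m U ->
  Y = invmx U *m diag_mx (\row_j (y j)%:C) *m U ->
  Mt t X Y = invmx U *m diag_mx (\row_j ((\sum_k x k `^ t * y k `^ (1 - t))^-1
                                           * (x j `^ t * y j `^ (1 - t)))%:C) *m U.
Proof.
move=> Xh Yh Uu XE YE.
rewrite Mt_eq (mxpowR_row t Xh Uu XE) (mxpowR_row (1 - t) Yh Uu YE) (dg_mulr _ _ Uu) (dg_trr _ Uu).
rewrite dg_scaler sumC CinvR.
have -> : \row_j ((\sum_k x k `^ t * y k `^ (1 - t))^-1%:C * ((x j `^ t)%:C * (y j `^ (1 - t))%:C))
  = \row_j ((\sum_k x k `^ t * y k `^ (1 - t))^-1 * (x j `^ t * y j `^ (1 - t)))%:C :> 'rV[C]_n.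
  by apply/matrixP => i j; rewrite !mxE !rmorphM.
reflexivity.
Qed.

Lemma ReC (x : R) : complex.Re ((x%:C : C)) = x.
Proof. by []. Qed.

Lemma eqC0 (x : R) : ((x%:C : C) != 0) = (x != 0).
Proof. by rewrite fmorph_eq0. Qed.

Lemma petz_row (X Y U : M) (x y : I -> R) al :
  X \is hermsymmx -> Y \is hermsymmx -> U \in unitmx ->
  X = invmx U *m diag_mx (\row_j (x j)%:C) *m U ->
  Y = invmx U *m diag_mx (\row_j (y j)%:C) *m U ->
  petz al X Y = P0 al x y.
Proof.
move=> Xh Yh Uu XE YE.
rewrite /petz (tr_row al (1 - al) Xh Yh Uu XE YE) {1}XE {1}YE (dg_subr _ _ Uu).
rewrite /P0 /=.
have -> : [forall j, (((x j)%:C : C) != 0) ==> (((y j)%:C : C) != 0)] =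
          [forall j, (x j != 0) ==> (y j != 0)].
  by apply/eq_forallb => j; rewrite !eqC0.
by [].
Qed.

Lemma mxpowR0 (X : M) : mxpowR X 0 = 1%:M.
Proof. rewrite mxpowR_pw; apply: pw_one => z; by rewrite powRr0 rmorph1. Qed.

Lemma mxpowR1 (X : M) : psd X -> mxpowR X 1 = X.
Proof.
move=> Xp; rewrite mxpowR_pw; apply: pw_id (hermitian_normalmx Xp.1) _ => i.
have [E l0] := cge0 (psd_spec Xp i).
by rewrite powRr1 // -E.
Qed.

Lemma tr_row1 (X U : M) (x : I -> R) : U \in unitmx ->
  X = invmx U *m diag_mx (\row_j (x j)%:C) *m U -> \tr X = (\sum_j x j)%:C.
Proof. by move=> Uu XE; rewrite XE dg_trr // sumC1. Qed.

Lemma Mt0 (X Y : M) : density Y -> Mt 0 X Y = Y.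
Proof.
move=> [Yp Ytr]; rewrite /Mt subr0 mxpowR0 mul1mx mxpowR1 // Ytr invr1 scale1r.
by [].
Qed.

Lemma Mt1 (X Y : M) : density X -> Mt 1 X Y = X.
Proof.
move=> [Xp Xtr]; rewrite /Mt subrr mxpowR0 mulmx1 mxpowR1 // Xtr invr1 scale1r.
by [].
Qed.

End MQ.

Lemma half01 (R : realType) : 0 <= (2^-1 : R) <= 1.
Proof. apply/andP; split; lra. Qed.

Theorem corollary1 (R : realType) (n : nat) (A : 'M[R[i]]_n -> Prop)
    (rho sigma tau omega : 'M[R[i]]_n) (t alpha : R) :
  (forall X, A X -> density X) -> gen_convex A ->
  A rho -> A sigma -> A tau -> A omega -> 0 <= t <= 1 ->
  let RHS : \bar R :=
    (t%:E * petz alpha rho tau + (1 - t)%:E * petz alpha sigma omega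
     + (alpha / (1 - alpha) *
          ln (complex.Re (\tr (mxpowR rho t *m mxpowR sigma (1 - t))))
        + ln (complex.Re (\tr (mxpowR tau t *m mxpowR omega (1 - t)))))%:E)%E in
  let LHS : \bar R := petz alpha (Mt t rho sigma) (Mt t tau omega) in
  (1 < alpha -> (LHS <= RHS)%E) /\ (0 < alpha < 1 -> (RHS <= LHS)%E).
Proof.
move=> HA Hgc Ar As At Ao /andP[t0 t1].
have dr := HA _ Ar; have ds := HA _ As; have dt := HA _ At; have dw := HA _ Ao.
have [->|tn0] := eqVneq t 0.
  move=> RHS LHS; rewrite /LHS /RHS !Mt0 // subr0 !mxpowR0 !mul1mx (mxpowR1 ds.1) (mxpowR1 dw.1).
  rewrite ds.2 dw.2 /= ln1 mulr0 addr0 mul0e add0e mul1e adde0.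
  by split => _.
have [->|tn1] := eqVneq t 1.
  move=> RHS LHS; rewrite /LHS /RHS !Mt1 // subrr !mxpowR0 !mulmx1 (mxpowR1 dr.1) (mxpowR1 dt.1).
  rewrite dr.2 dt.2 /= ln1 mulr0 addr0 mul0e adde0 mul1e adde0.
  by split => _.
have tt : 0 < t < 1 by apply/andP; split; rewrite lt_def ?tn0 ?t0 // eq_sym tn1.
have ht01 : 0 <= t <= 1 by rewrite t0 t1.
have ht := half01 R.
have cm : forall X Y, A X -> A Y -> X *m Y = Y *m X.
  by move=> X Y AX AY; apply: (comm_of (HA _ AX).1 (HA _ AY).1 (Hgc X Y AX AY _ ht).1).
have mA : forall X, X \in [:: rho; sigma; tau; omega] -> A X.
  by move=> X; rewrite !inE => /orP [/eqP ->|/orP [/eqP ->|/orP [/eqP ->|/eqP ->]]].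
have hh : forall X, X \in [:: rho; sigma; tau; omega] -> X \is hermsymmx.
  by move=> X /mA /HA [[]].
have hc : {in [:: rho; sigma; tau; omega] &, forall X Y, comm_mx X Y}.
  by move=> X Y XA YA; apply: cm; apply: mA.
have [U Uu HU] := codiag hh hc.
have mr : rho \in [:: rho; sigma; tau; omega] by rewrite !inE eqxx.
have ms : sigma \in [:: rho; sigma; tau; omega] by rewrite !inE eqxx !orbT.
have mt : tau \in [:: rho; sigma; tau; omega] by rewrite !inE eqxx !orbT.
have mw : omega \in [:: rho; sigma; tau; omega] by rewrite !inE eqxx !orbT.
have [dr0 Er0] := HU rho mr.
have [ds0 Es0] := HU sigma ms.
have [dt0 Et0] := HU tau mt.
have [dw0 Ew0] := HU omega mw.
have [r [r0 Er]] := psd_row dr.1 Uu Er0.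
have [s [s0 Es]] := psd_row ds.1 Uu Es0.
have [u [u0 Eu]] := psd_row dt.1 Uu Et0.
have [w [w0 Ew]] := psd_row dw.1 Uu Ew0.
have rS : \sum_j r j = 1.
  by apply: complexI; rewrite -(tr_row1 Uu Er) dr.2 rmorph1.
have sS : \sum_j s j = 1.
  by apply: complexI; rewrite -(tr_row1 Uu Es) ds.2 rmorph1.
have dM1 := (Hgc rho sigma Ar As t ht01).1.
have dM2 := (Hgc tau omega At Ao t ht01).1.
have EM1 := Mt_row t dr.1.1 ds.1.1 Uu Er Es.
have EM2 := Mt_row t dt.1.1 dw.1.1 Uu Eu Ew.
have Zpos : forall (X Y : 'M[R[i]]_n) (x y : 'I_n -> R), density (Mt t X Y) ->
    X \is hermsymmx -> Y \is hermsymmx ->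
    (forall j, 0 <= x j) -> (forall j, 0 <= y j) ->
    X = invmx U *m diag_mx (\row_j (x j)%:C) *m U ->
    Y = invmx U *m diag_mx (\row_j (y j)%:C) *m U ->
    0 < \sum_j x j `^ t * y j `^ (1 - t).
  move=> X Y x y dM Xh Yh x0 y0 XE YE.
  have := dM.2; rewrite Mt_eq mxtraceZ (tr_row t (1 - t) Xh Yh Uu XE YE) => h.
  have Z0 : 0 <= \sum_j x j `^ t * y j `^ (1 - t).
    by apply: sumr_ge0 => j _; rewrite mulr_ge0 ?powR_ge0.
  rewrite lt_def Z0 andbT; apply/eqP => Z00; move: h.
  by rewrite Z00 rmorph0 invr0 mul0r => /eqP; rewrite eq_sym oner_eq0.
have Z1p := Zpos _ _ _ _ dM1 dr.1.1 ds.1.1 r0 s0 Er Es.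
have Z2p := Zpos _ _ _ _ dM2 dt.1.1 dw.1.1 u0 w0 Eu Ew.
move=> RHS LHS; rewrite /LHS /RHS.
rewrite (petz_row alpha dM1.1.1 dM2.1.1 Uu EM1 EM2).
rewrite (petz_row alpha dr.1.1 dt.1.1 Uu Er Eu) (petz_row alpha ds.1.1 dw.1.1 Uu Es Ew).
have T1E := tr_row t (1 - t) dr.1.1 ds.1.1 Uu Er Es.
have T2E := tr_row t (1 - t) dt.1.1 dw.1.1 Uu Eu Ew.
move: T1E T2E.
generalize (\tr (mxpowR rho t *m mxpowR sigma (1 - t))) => T1 ->.
generalize (\tr (mxpowR tau t *m mxpowR omega (1 - t))) => T2 ->.
rewrite !ReC.
split => ha.
  have a0 : 0 < alpha by apply: lt_trans ha.
  have a1 : alpha != 1 by rewrite gt_eqF.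
  exact: ((core r0 s0 u0 w0 rS sS tt a0 a1 Z1p Z2p).1 ha).
case/andP: ha => a0 a1'.
have a1 : alpha != 1 by rewrite lt_eqF.
exact: ((core r0 s0 u0 w0 rS sS tt a0 a1 Z1p Z2p).2 a1').
Qed.
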